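(* The base configuration of the graphic matroid $\mathcal{M}(K_4)$ of the complete graph on four vertices has levelness exactly $3$.
   Context: The graphic matroid $\mathcal{M}(G)$ of a graph $G=(V,E)$ has ground set $E$ and bases the spanning forests of $G$. The base configuration of a matroid $\mathcal{M}=(E,\mathcal{B})$ is $V_{\mathcal{M}}=\{\mathbf{1}_B:B\in\mathcal{B}\}\subset\mathbb{R}^E$. For a finite point set $V$ and an affine function $\ell$ nonnegative on $V$, $\{v\in V:\ell(v)=0\}$ is a face; inclusion-maximal faces different from $V$ are facets and the corresponding $\ell$ facet-defining. The levelness of $V$ is the smallest $k$ such that every facet-defining affine function takes at most $k$ distinct values on $V$. *)

(* Defs.v *)
From HB Require Import structures.
From mathcomp Require Import all_boot all_order all_algebra.
From mathcomp Require Import reals.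
Set Implicit Arguments. Unset Strict Implicit. Unset Printing Implicit Defensive.
Import Order.TTheory GRing.Theory Num.Theory.
Local Open Scope ring_scope.

Section Graphic.
(* A (multi)graph: vertex type Vt, edge type Et, each edge has an endpoint set. *)
Variables (Vt Et : finType) (ends : Et -> {set Vt}).

Definition adj (F : {set Et}) : rel Vt :=
  fun u v => (u != v) && [exists e in F, ends e == [set u; v]].

Definition acyclic (F : {set Et}) : Prop :=
  forall e, e \in F -> forall u v, ends e = [set u; v] -> u != v ->
    ~~ connect (adj (F :\ e)) u v.

Definition spanning_forest (F : {set Et}) : Prop :=
  acyclic F /\ forall u v, connect (adj setT) u v -> connect (adj F) u v.
End Graphic.

Section Levelness.
Variables (R : realType) (E : finType).
Definition pt := E -> R.

Definition aff (a : E -> R) (c : R) (x : pt) : R := c + \sum_(e : E) a e * x e.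

Definition nonneg_on (P : pt -> Prop) a c : Prop := forall x, P x -> 0 <= aff a c x.

Definition zero_set (P : pt -> Prop) a c : pt -> Prop := fun x => P x /\ aff a c x = 0.

Definition same_set (A B : pt -> Prop) : Prop := forall x, A x <-> B x.
Definition sub_set (A B : pt -> Prop) : Prop := forall x, A x -> B x.

Definition is_face (P : pt -> Prop) (F : pt -> Prop) : Prop :=
  exists a c, nonneg_on P a c /\ same_set F (zero_set P a c).

Definition is_facet (P F : pt -> Prop) : Prop :=
  [/\ is_face P F, ~ same_set F P &
      forall F', is_face P F' -> ~ same_set F' P -> sub_set F F' -> sub_set F' F].

Definition facet_defining (P : pt -> Prop) a c : Prop :=
  nonneg_on P a c /\ is_facet P (zero_set P a c).

Definition at_most_values (P : pt -> Prop) a c (k : nat) : Prop :=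
  exists s : seq R, (size s <= k)%N /\ forall x, P x -> aff a c x \in s.

Definition levelness_bound (P : pt -> Prop) (k : nat) : Prop :=
  forall a c, facet_defining P a c -> at_most_values P a c k.

Definition is_levelness (P : pt -> Prop) (k : nat) : Prop :=
  levelness_bound P k /\ forall k', levelness_bound P k' -> (k <= k')%N.
End Levelness.

Definition base_configuration (R : realType) (Vt Et : finType)
  (ends : Et -> {set Vt}) : pt R Et -> Prop :=
  fun x => exists B : {set Et}, spanning_forest ends B /\ x = (fun e => (e \in B)%:R).

Definition K4_edge := {A : {set 'I_4} | #|A| == 2%N}.
Definition K4_ends (e : K4_edge) : {set 'I_4} := val e.

(* Main.v *)
Require Import Defs.
From mathcomp Require Import all_boot all_order all_algebra.
From mathcomp Require Import reals.
From Stdlib Require Import FunctionalExtensionality.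
Set Implicit Arguments. Unset Strict Implicit. Unset Printing Implicit Defensive.
Import Order.TTheory GRing.Theory Num.Theory.

Definition o0 : 'I_4 := @Ordinal 4 0 isT.
Definition o1 : 'I_4 := @Ordinal 4 1 isT.
Definition o2 : 'I_4 := @Ordinal 4 2 isT.
Definition o3 : 'I_4 := @Ordinal 4 3 isT.

Lemma card2_ok (x y : 'I_4) : x != y -> #|[set x; y]| == 2.
Proof. by move=> h; rewrite cards2 h. Qed.

Definition mkE (x y : 'I_4) (h : x != y) : K4_edge := exist _ [set x; y] (card2_ok h).
Definition E0 := @mkE o0 o1 isT.
Definition E1 := @mkE o0 o2 isT.
Definition E2 := @mkE o0 o3 isT.
Definition E3 := @mkE o1 o2 isT.
Definition E4 := @mkE o1 o3 isT.
Definition E5 := @mkE o2 o3 isT.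
Definition Elist := [:: E0; E1; E2; E3; E4; E5].
Definition E (m : nat) : K4_edge := nth E0 Elist m.
Definition pe := [:: 0; 0; 0; 1; 1; 2]%N.
Definition qe := [:: 1; 2; 3; 2; 3; 3]%N.

Lemma ordI4 (x : 'I_4) : x = o0 \/ x = o1 \/ x = o2 \/ x = o3.
Proof.
case: x => [[|[|[|[|n]]]] h]; [left|right;left|right;right;left|right;right;right|by []];
  by apply: val_inj.
Qed.

Lemma ends_E m : (m < 6)%N -> K4_ends (E m) =
   [set (inord (nth 0 pe m) : 'I_4); inord (nth 0 qe m)].
Proof.
by case: m => [|[|[|[|[|[|m]]]]]] //= _; congr [set _; _]; apply: val_inj; rewrite /= inordK.
Qed.

Lemma edge_cases (e : K4_edge) : exists2 m, (m < 6)%N & e = E m.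
Proof.
case: e => A hA; have := hA; move/cards2P => [x [y [xy eA]]].
have eq2 : forall (B : {set 'I_4}) (hB : #|B| == 2), B = A -> exist (fun A : {set 'I_4} => #|A| == 2) B hB = exist _ A hA.
  by move=> B hB eB; apply: val_inj.
have sw : [set y; x] = A by rewrite eA setUC.
move: xy sw eA.
case: (ordI4 x) => [->|[->|[->|->]]]; case: (ordI4 y) => [->|[->|[->|->]]] // _ sw eA;
 [exists 0%N|exists 1%N|exists 2%N|exists 0%N|exists 3%N|exists 4%N|
  exists 1%N|exists 3%N|exists 5%N|exists 2%N|exists 4%N|exists 5%N] => //;
 by symmetry; apply: eq2.
Qed.

Lemma E_inj m n : (m < 6)%N -> (n < 6)%N -> E m = E n -> m = n.
Proof.
move=> hm hn /(congr1 K4_ends); rewrite !ends_E // => /setP H.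
have H1 := H (inord (nth 0 pe m)); have H2 := H (inord (nth 0 qe m)).
move: H1 H2; clear H; rewrite !inE.
by case: m hm => [|[|[|[|[|[|m]]]]]] //; case: n hn => [|[|[|[|[|[|n]]]]]] //= _ _;
  rewrite /eq_op /= ?inordK.
Qed.

Lemma set2_eq (T : finType) (a b c d : T) : a != b ->
  ([set a; b] == [set c; d]) = ((a == c) && (b == d)) || ((a == d) && (b == c)).
Proof.
move=> ab; apply/eqP/idP.
  move/setP => H.
  have Ha : (a == c) || (a == d) by rewrite -(in_set2 a c d) -H in_set2 eqxx.
  have Hb : (b == c) || (b == d) by rewrite -(in_set2 b c d) -H in_set2 eqxx orbT.
  case/orP: Ha => /eqP ac; subst.
    by case/orP: Hb => /eqP bd; subst; move: ab; rewrite !eqxx ?orbT.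
  by case/orP: Hb => /eqP bd; subst; move: ab; rewrite !eqxx ?orbT.
case/orP => /andP [/eqP -> /eqP ->] //; by rewrite setUC.
Qed.

Definition eid (e : K4_edge) : nat := find (fun m => E m == e) (iota 0 6).

Lemma eidP e : (eid e < 6)%N /\ E (eid e) = e.
Proof.
have [m hm ->] := edge_cases e.
have hh : has (fun m' => E m' == E m) (iota 0 6) by apply/hasP; exists m; rewrite ?mem_iota ?eqxx.
have := nth_find 0 hh; have := hh; rewrite has_find size_iota => hf.
by rewrite nth_iota // add0n => /eqP.
Qed.

Lemma eidE m : (m < 6)%N -> eid (E m) = m.
Proof. by move=> hm; case: (eidP (E m)) => h1 h2; apply: E_inj. Qed.

Lemma sum_edges (V : nmodType) (F : nat -> V) :
  (\sum_(e : K4_edge) F (eid e) = \sum_(m < 6) F m)%R.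
Proof.
rewrite (reindex (fun m : 'I_6 => E m)) /=.
  by apply: eq_bigr => m _; rewrite eidE.
exists (fun e => inord (eid e)) => [m _|e _].
  by apply: val_inj; rewrite /= eidE // inordK.
by rewrite inordK; case: (eidP e).
Qed.

Lemma endsE m (u v : 'I_4) : (m < 6)%N ->
  (K4_ends (E m) == [set u; v]) =
  ((nth 0 pe m == val u) && (nth 0 qe m == val v)) ||
  ((nth 0 pe m == val v) && (nth 0 qe m == val u)).
Proof.
move=> hm; rewrite ends_E // set2_eq.
  by rewrite -!val_eqE /= !inordK //; case: m hm => [|[|[|[|[|[|m]]]]]].
by rewrite -val_eqE /= !inordK //; case: m hm => [|[|[|[|[|[|m]]]]]].
Qed.

Definition nadj (b : seq bool) (u v : nat) : bool :=
  (u != v) && has (fun m => nth false b m &&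
     (((nth 0 pe m == u) && (nth 0 qe m == v)) || ((nth 0 pe m == v) && (nth 0 qe m == u))))
   (iota 0 6).

Definition bitsB (B : {set K4_edge}) : seq bool := [seq E m \in B | m <- iota 0 6].

Lemma bitsB_nth B m : (m < 6)%N -> nth false (bitsB B) m = (E m \in B).
Proof. by move=> hm; rewrite (nth_map 0) ?size_iota // nth_iota. Qed.

Lemma adjE B (u v : 'I_4) : adj K4_ends B u v = nadj (bitsB B) u v.
Proof.
rewrite /adj /nadj; congr (_ && _).
apply/existsP/hasP.
  move=> [e /andP [eB he]]; have [m hm em] := edge_cases e.
  exists m; first by rewrite mem_iota.
  by rewrite bitsB_nth // -em eB /= -endsE // -em.
move=> [m]; rewrite mem_iota /= => hm /andP [hb he].
exists (E m); rewrite -bitsB_nth // hb /= endsE //.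
Qed.

Definition step (b : seq bool) (S : seq nat) : seq nat :=
  S ++ [seq w <- iota 0 4 | has (fun z => nadj b z w) S].
Definition reach b x := iter 3 (step b) [:: x].
Definition closedb b x := all (fun z => (z \in reach b x) ==>
   all (fun w => nadj b z w ==> (w \in reach b x)) (iota 0 4)) (iota 0 4).

Definition radj (b : seq bool) : rel 'I_4 := fun u v => nadj b u v.

Lemma reach_x b x : x \in reach b x.
Proof.
rewrite /reach; elim: 3 => [|n IH]; first by rewrite inE.
by rewrite iterS /step mem_cat IH.
Qed.

Lemma reach_conn b (x y : 'I_4) : nat_of_ord y \in reach b x -> connect (radj b) x y.
Proof.
suff H : forall n w, w \in iter n (step b) [:: val x] -> (w < 4)%N && connect (radj b) x (inord w).
  by move/H => /andP [_]; rewrite inord_val.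
elim => [|n IH] w /=.
  by rewrite inE => /eqP ->; rewrite ltn_ord inord_val connect0.
rewrite /step mem_cat => /orP [/IH //|].
rewrite mem_filter mem_iota /= => /andP [/hasP [z zS hzw] hw]; rewrite hw /=.
have /andP [hz cz] := IH _ zS.
apply: connect_trans cz _; apply: connect1; rewrite /radj /= !inordK //.
Qed.

Lemma conn_reach b (x y : 'I_4) : closedb b x -> connect (radj b) x y -> nat_of_ord y \in reach b x.
Proof.
move=> /allP hc /connectP [p pth ->].
have := reach_x b x; move: hc; set S := reach b x => hc; clearbody S.
elim: p (x : 'I_4) pth => [|w p IH] z /= ; first by [].
move=> /andP [hzw pth] hz. have IH2 := IH w pth. apply: IH2.
have hzi : nat_of_ord z \in iota 0 4 by rewrite mem_iota ltn_ord.
have hwi : nat_of_ord w \in iota 0 4 by rewrite mem_iota ltn_ord.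
have /allP Hz := implyP (hc _ hzi) hz.
exact: (implyP (Hz _ hwi) hzw).
Qed.

Definition trees : seq (seq bool) := [::
  [:: true; true; true; false; false; false];
  [:: true; true; false; false; true; false];
  [:: true; true; false; false; false; true];
  [:: true; false; true; true; false; false];
  [:: true; false; true; false; false; true];
  [:: true; false; false; true; true; false];
  [:: true; false; false; true; false; true];
  [:: true; false; false; false; true; true];
  [:: false; true; true; true; false; false];
  [:: false; true; true; false; true; false];
  [:: false; true; false; true; true; false];
  [:: false; true; false; true; false; true];
  [:: false; true; false; false; true; true];
  [:: false; false; true; true; true; false];
  [:: false; false; true; true; false; true];
  [:: false; false; true; false; true; true]].

Fixpoint allbl (n : nat) : seq (seq bool) :=
  if n is n'.+1 then [seq true :: s | s <- allbl n'] ++ [seq false :: s | s <- allbl n'] else [:: [::]].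

Lemma mem_allbl s : s \in allbl (size s).
Proof.
elim: s => [|b s IH] //=; rewrite mem_cat.
by case: b; rewrite (map_f _ IH) ?orbT.
Qed.

Definition clr (b : seq bool) m := [seq nth false b j && (j != m) | j <- iota 0 6].

Definition acycn b := all (fun m => nth false b m ==>
   ~~ (nth 0 qe m \in reach (clr b m) (nth 0 pe m)) &&
   ~~ (nth 0 pe m \in reach (clr b m) (nth 0 qe m))) (iota 0 6).
Definition alln b := all (fun x => all (fun y => y \in reach b x) (iota 0 4)) (iota 0 4).
Definition sfn b := acycn b && alln b.

Lemma C1 : all (fun s => all (closedb s) (iota 0 4)) (allbl 6).
Proof. by vm_compute. Qed.
Lemma C2 : all (fun s => sfn s == (s \in trees)) (allbl 6).
Proof. by vm_compute. Qed.
Lemma C3 : alln [:: true; true; true; true; true; true].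
Proof. by vm_compute. Qed.

Lemma size_bitsB B : size (bitsB B) = 6.
Proof. by rewrite size_map size_iota. Qed.

Lemma closed6 s x : size s = 6 -> (x < 4)%N -> closedb s x.
Proof.
move=> hs hx; have := allP C1 s; rewrite -hs mem_allbl => /(_ isT) /allP; apply.
by rewrite mem_iota.
Qed.

Lemma connE B (u v : 'I_4) :
  connect (adj K4_ends B) u v = (nat_of_ord v \in reach (bitsB B) u).
Proof.
have -> : connect (adj K4_ends B) u v = connect (radj (bitsB B)) u v.
  by apply: eq_connect => x y; rewrite adjE.
apply/idP/idP => [|/reach_conn //]; apply: conn_reach.
by apply: closed6; rewrite ?size_bitsB ?ltn_ord.
Qed.

Lemma bitsB_del B m : (m < 6)%N -> bitsB (B :\ E m) = clr (bitsB B) m.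
Proof.
move=> hm; apply/eq_in_map => j; rewrite mem_iota /= => hj.
rewrite in_setD1 bitsB_nth // andbC; congr (_ && _).
by apply/idP/idP; apply: contra => /eqP h; apply/eqP; [rewrite h|apply: E_inj].
Qed.

Lemma bitsB_setT : bitsB setT = [:: true; true; true; true; true; true].
Proof. by rewrite /bitsB /= !in_setT. Qed.

Lemma pq_ok m : (m < 6)%N -> [/\ (nth 0 pe m < 4)%N, (nth 0 qe m < 4)%N &
   (inord (nth 0 pe m) : 'I_4) != inord (nth 0 qe m)].
Proof.
by case: m => [|[|[|[|[|[|m]]]]]] // _; rewrite -val_eqE /= !inordK.
Qed.

Lemma sf_iff B : spanning_forest K4_ends B <-> sfn (bitsB B).
Proof.
split.
  move=> [hac hsp]; apply/andP; split.
    apply/allP => m hm'; have hm : (m < 6)%N by move: hm'; rewrite mem_iota.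
     rewrite bitsB_nth //; apply/implyP => hB.
    have [hp hq hpq] := pq_ok hm.
    have h1 := hac (E m) hB _ _ (ends_E hm) hpq.
    have h2 := hac (E m) hB _ _ (etrans (ends_E hm) (setUC _ _)) (negbT (etrans (eq_sym _ _) (negbTE hpq))).
    rewrite connE bitsB_del // !inordK // in h1; rewrite connE bitsB_del // !inordK // in h2.
    by rewrite h1 h2.
  apply/allP => x hx'; apply/allP => y hy'.
  have hx : (x < 4)%N by move: hx'; rewrite mem_iota.
  have hy : (y < 4)%N by move: hy'; rewrite mem_iota.
  have h := hsp (inord x) (inord y).
  rewrite !connE !inordK // bitsB_setT in h; apply: h.
  exact: (allP (allP C3 x hx') y hy').
case/andP => hac hsp; split.
  move=> e eB u v he uv; have [m hm em] := edge_cases e; subst e.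
  rewrite connE bitsB_del //.
  have := allP hac m; rewrite mem_iota /= hm bitsB_nth // eB /= => /(_ isT) /andP [n1 n2].
  move/eqP: he; rewrite endsE // => /orP [] /andP [/eqP hu /eqP hv]; by rewrite -hu -hv.
move=> u v _; rewrite connE.
have hx' : nat_of_ord u \in iota 0 4 by rewrite mem_iota /= ltn_ord.
have hy' : nat_of_ord v \in iota 0 4 by rewrite mem_iota /= ltn_ord.
exact: (allP (allP hsp _ hx') _ hy').
Qed.

Definition facets : seq (seq int * int) := [::
  ([:: Posz 1; Posz 0; Posz 0; Posz 0; Posz 0; Posz 0], Posz 0);
  ([:: Posz 0; Posz 1; Posz 0; Posz 0; Posz 0; Posz 0], Posz 0);
  ([:: Posz 0; Posz 0; Posz 1; Posz 0; Posz 0; Posz 0], Posz 0);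
  ([:: Posz 0; Posz 0; Posz 0; Posz 1; Posz 0; Posz 0], Posz 0);
  ([:: Posz 0; Posz 0; Posz 0; Posz 0; Posz 1; Posz 0], Posz 0);
  ([:: Posz 0; Posz 0; Posz 0; Posz 0; Posz 0; Posz 1], Posz 0);
  ([:: Negz 0; Posz 0; Posz 0; Posz 0; Posz 0; Posz 0], Posz 1);
  ([:: Posz 0; Negz 0; Posz 0; Posz 0; Posz 0; Posz 0], Posz 1);
  ([:: Posz 0; Posz 0; Negz 0; Posz 0; Posz 0; Posz 0], Posz 1);
  ([:: Posz 0; Posz 0; Posz 0; Negz 0; Posz 0; Posz 0], Posz 1);
  ([:: Posz 0; Posz 0; Posz 0; Posz 0; Negz 0; Posz 0], Posz 1);
  ([:: Posz 0; Posz 0; Posz 0; Posz 0; Posz 0; Negz 0], Posz 1);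
  ([:: Negz 0; Negz 0; Posz 0; Negz 0; Posz 0; Posz 0], Posz 2);
  ([:: Negz 0; Posz 0; Negz 0; Posz 0; Negz 0; Posz 0], Posz 2);
  ([:: Posz 0; Negz 0; Negz 0; Posz 0; Posz 0; Negz 0], Posz 2);
  ([:: Posz 0; Posz 0; Posz 0; Negz 0; Negz 0; Negz 0], Posz 2)].
Definition rels : seq (nat * nat * nat * nat) := [::
 (0,5,1,3);
 (5,0,3,1);
 (0,5,3,1);
 (5,0,1,3);
 (1,3,0,5);
 (3,1,5,0);
 (1,3,5,0);
 (3,1,0,5);
 (0,6,2,3);
 (6,0,3,2);
 (0,6,3,2);
 (6,0,2,3);
 (2,3,0,6);
 (3,2,6,0);
 (2,3,6,0);
 (3,2,0,6);
 (0,7,1,4);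
 (7,0,4,1);
 (0,7,4,1);
 (7,0,1,4);
 (1,4,0,7);
 (4,1,7,0);
 (1,4,7,0);
 (4,1,0,7);
 (0,10,1,8);
 (10,0,8,1);
 (0,10,8,1);
 (10,0,1,8);
 (1,8,0,10);
 (8,1,10,0);
 (1,8,10,0);
 (8,1,0,10);
 (0,11,2,8);
 (11,0,8,2);
 (0,11,8,2);
 (11,0,2,8);
 (2,8,0,11);
 (8,2,11,0);
 (2,8,11,0);
 (8,2,0,11);
 (0,12,2,9);
 (12,0,9,2);
 (0,12,9,2);
 (12,0,2,9);
 (2,9,0,12);
 (9,2,12,0);
 (2,9,12,0);
 (9,2,0,12);
 (0,13,3,9);
 (13,0,9,3);
 (0,13,9,3);
 (13,0,3,9);
 (3,9,0,13);
 (9,3,13,0);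
 (3,9,13,0);
 (9,3,0,13);
 (0,14,4,8);
 (14,0,8,4);
 (0,14,8,4);
 (14,0,4,8);
 (4,8,0,14);
 (8,4,14,0);
 (4,8,14,0);
 (8,4,0,14);
 (0,15,4,9);
 (15,0,9,4);
 (0,15,9,4);
 (15,0,4,9);
 (4,9,0,15);
 (9,4,15,0);
 (4,9,15,0);
 (9,4,0,15);
 (1,6,2,5);
 (6,1,5,2);
 (1,6,5,2);
 (6,1,2,5);
 (2,5,1,6);
 (5,2,6,1);
 (2,5,6,1);
 (5,2,1,6);
 (1,11,2,10);
 (11,1,10,2);
 (1,11,10,2);
 (11,1,2,10);
 (2,10,1,11);
 (10,2,11,1);
 (2,10,11,1);
 (10,2,1,11);
 (1,13,5,9);
 (13,1,9,5);
 (1,13,9,5);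
 (13,1,5,9);
 (5,9,1,13);
 (9,5,13,1);
 (5,9,13,1);
 (9,5,1,13);
 (1,14,2,13);
 (14,1,13,2);
 (1,14,13,2);
 (14,1,2,13);
 (2,13,1,14);
 (13,2,14,1);
 (2,13,14,1);
 (13,2,1,14);
 (1,14,3,12);
 (14,1,12,3);
 (1,14,12,3);
 (14,1,3,12);
 (3,12,1,14);
 (12,3,14,1);
 (3,12,14,1);
 (12,3,1,14);
 (1,14,4,10);
 (14,1,10,4);
 (1,14,10,4);
 (14,1,4,10);
 (4,10,1,14);
 (10,4,14,1);
 (4,10,14,1);
 (10,4,1,14);
 (1,14,6,9);
 (14,1,9,6);
 (1,14,9,6);
 (14,1,6,9);
 (6,9,1,14);
 (9,6,14,1);
 (6,9,14,1);
 (9,6,1,14);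
 (1,14,7,8);
 (14,1,8,7);
 (1,14,8,7);
 (14,1,7,8);
 (7,8,1,14);
 (8,7,14,1);
 (7,8,14,1);
 (8,7,1,14);
 (1,15,7,9);
 (15,1,9,7);
 (1,15,9,7);
 (15,1,7,9);
 (7,9,1,15);
 (9,7,15,1);
 (7,9,15,1);
 (9,7,1,15);
 (2,13,3,12);
 (13,2,12,3);
 (2,13,12,3);
 (13,2,3,12);
 (3,12,2,13);
 (12,3,13,2);
 (3,12,13,2);
 (12,3,2,13);
 (2,13,4,10);
 (13,2,10,4);
 (2,13,10,4);
 (13,2,4,10);
 (4,10,2,13);
 (10,4,13,2);
 (4,10,13,2);
 (10,4,2,13);
 (2,13,6,9);
 (13,2,9,6);
 (2,13,9,6);
 (13,2,6,9);
 (6,9,2,13);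
 (9,6,13,2);
 (6,9,13,2);
 (9,6,2,13);
 (2,13,7,8);
 (13,2,8,7);
 (2,13,8,7);
 (13,2,7,8);
 (7,8,2,13);
 (8,7,13,2);
 (7,8,13,2);
 (8,7,2,13);
 (2,14,4,11);
 (14,2,11,4);
 (2,14,11,4);
 (14,2,4,11);
 (4,11,2,14);
 (11,4,14,2);
 (4,11,14,2);
 (11,4,2,14);
 (2,15,4,12);
 (15,2,12,4);
 (2,15,12,4);
 (15,2,4,12);
 (4,12,2,15);
 (12,4,15,2);
 (4,12,15,2);
 (12,4,2,15);
 (3,7,4,5);
 (7,3,5,4);
 (3,7,5,4);
 (7,3,4,5);
 (4,5,3,7);
 (5,4,7,3);
 (4,5,7,3);
 (5,4,3,7);
 (3,10,5,8);
 (10,3,8,5);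
 (3,10,8,5);
 (10,3,5,8);
 (5,8,3,10);
 (8,5,10,3);
 (5,8,10,3);
 (8,5,3,10);
 (3,11,6,8);
 (11,3,8,6);
 (3,11,8,6);
 (11,3,6,8);
 (6,8,3,11);
 (8,6,11,3);
 (6,8,11,3);
 (8,6,3,11);
 (3,12,4,10);
 (12,3,10,4);
 (3,12,10,4);
 (12,3,4,10);
 (4,10,3,12);
 (10,4,12,3);
 (4,10,12,3);
 (10,4,3,12);
 (3,12,6,9);
 (12,3,9,6);
 (3,12,9,6);
 (12,3,6,9);
 (6,9,3,12);
 (9,6,12,3);
 (6,9,12,3);
 (9,6,3,12);
 (3,12,7,8);
 (12,3,8,7);
 (3,12,8,7);
 (12,3,7,8);
 (7,8,3,12);
 (8,7,12,3);
 (7,8,12,3);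
 (8,7,3,12);
 (3,15,4,13);
 (15,3,13,4);
 (3,15,13,4);
 (15,3,4,13);
 (4,13,3,15);
 (13,4,15,3);
 (4,13,15,3);
 (13,4,3,15);
 (4,10,6,9);
 (10,4,9,6);
 (4,10,9,6);
 (10,4,6,9);
 (6,9,4,10);
 (9,6,10,4);
 (6,9,10,4);
 (9,6,4,10);
 (4,10,7,8);
 (10,4,8,7);
 (4,10,8,7);
 (10,4,7,8);
 (7,8,4,10);
 (8,7,10,4);
 (7,8,10,4);
 (8,7,4,10);
 (5,11,6,10);
 (11,5,10,6);
 (5,11,10,6);
 (11,5,6,10);
 (6,10,5,11);
 (10,6,11,5);
 (6,10,11,5);
 (10,6,5,11);
 (5,12,7,10);
 (12,5,10,7);
 (5,12,10,7);
 (12,5,7,10);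
 (7,10,5,12);
 (10,7,12,5);
 (7,10,12,5);
 (10,7,5,12);
 (5,14,6,13);
 (14,5,13,6);
 (5,14,13,6);
 (14,5,6,13);
 (6,13,5,14);
 (13,6,14,5);
 (6,13,14,5);
 (13,6,5,14);
 (5,15,7,13);
 (15,5,13,7);
 (5,15,13,7);
 (15,5,7,13);
 (7,13,5,15);
 (13,7,15,5);
 (7,13,15,5);
 (13,7,5,15);
 (6,9,7,8);
 (9,6,8,7);
 (6,9,8,7);
 (9,6,7,8);
 (7,8,6,9);
 (8,7,9,6);
 (7,8,9,6);
 (8,7,6,9);
 (6,12,7,11);
 (12,6,11,7);
 (6,12,11,7);
 (12,6,7,11);
 (7,11,6,12);
 (11,7,12,6);
 (7,11,12,6);
 (11,7,6,12);
 (6,15,7,14);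
 (15,6,14,7);
 (6,15,14,7);
 (15,6,7,14);
 (7,14,6,15);
 (14,7,15,6);
 (7,14,15,6);
 (14,7,6,15);
 (8,12,9,11);
 (12,8,11,9);
 (8,12,11,9);
 (12,8,9,11);
 (9,11,8,12);
 (11,9,12,8);
 (9,11,12,8);
 (11,9,8,12);
 (8,15,9,14);
 (15,8,14,9);
 (8,15,14,9);
 (15,8,9,14);
 (9,14,8,15);
 (14,9,15,8);
 (9,14,15,8);
 (14,9,8,15);
 (10,14,11,13);
 (14,10,13,11);
 (10,14,13,11);
 (14,10,11,13);
 (11,13,10,14);
 (13,11,14,10);
 (11,13,14,10);
 (13,11,10,14);
 (10,15,12,13);
 (15,10,13,12);
 (10,15,13,12);
 (15,10,12,13);
 (12,13,10,15);
 (13,12,15,10);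
 (12,13,15,10);
 (13,12,10,15);
 (11,15,12,14);
 (15,11,14,12);
 (11,15,14,12);
 (15,11,12,14);
 (12,14,11,15);
 (14,12,15,11);
 (12,14,15,11);
 (14,12,11,15)].
Definition reps : seq (nat * nat) := [::(0,0); (0,0); (0,0); (3,3); (1,1); (2,2); (8,8); (3,3); (1,1); (0,0); (0,0); (0,0); (4,15); (2,11); (1,5); (1,0)].
Definition levt : seq (seq nat) := [::
  [:: 1; 1; 1; 1; 1; 1; 1; 1; 0; 0; 0; 0; 0; 0; 0; 0];
  [:: 1; 1; 1; 0; 0; 0; 0; 0; 1; 1; 1; 1; 1; 0; 0; 0];
  [:: 1; 0; 0; 1; 1; 0; 0; 0; 1; 1; 0; 0; 0; 1; 1; 1];
  [:: 0; 0; 0; 1; 0; 1; 1; 0; 1; 0; 1; 1; 0; 1; 1; 0];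
  [:: 0; 1; 0; 0; 0; 1; 0; 1; 0; 1; 1; 0; 1; 1; 0; 1];
  [:: 0; 0; 1; 0; 1; 0; 1; 1; 0; 0; 0; 1; 1; 0; 1; 1];
  [:: 0; 0; 0; 0; 0; 0; 0; 0; 1; 1; 1; 1; 1; 1; 1; 1];
  [:: 0; 0; 0; 1; 1; 1; 1; 1; 0; 0; 0; 0; 0; 1; 1; 1];
  [:: 0; 1; 1; 0; 0; 1; 1; 1; 0; 0; 1; 1; 1; 0; 0; 0];
  [:: 1; 1; 1; 0; 1; 0; 0; 1; 0; 1; 0; 0; 1; 0; 0; 1];
  [:: 1; 0; 1; 1; 1; 0; 1; 0; 1; 0; 0; 1; 0; 0; 1; 0];
  [:: 1; 1; 0; 1; 0; 1; 0; 0; 1; 1; 1; 0; 0; 1; 0; 0];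
  [:: 0; 0; 0; 0; 1; 0; 0; 1; 0; 1; 0; 0; 1; 1; 1; 2];
  [:: 0; 0; 1; 0; 0; 0; 1; 0; 1; 0; 1; 2; 1; 0; 1; 0];
  [:: 0; 1; 0; 1; 0; 2; 1; 1; 0; 0; 1; 0; 0; 1; 0; 0];
  [:: 2; 1; 1; 1; 1; 0; 0; 0; 1; 1; 0; 0; 0; 0; 0; 0]].

Definition rels45 : seq (nat * nat * nat * nat) := [::
 (0,5,1,3);
 (0,6,2,3);
 (0,7,1,4);
 (0,10,1,8);
 (0,11,2,8);
 (0,12,2,9);
 (0,13,3,9);
 (0,14,4,8);
 (0,15,4,9);
 (1,6,2,5);
 (1,11,2,10);
 (1,13,5,9);
 (1,14,2,13);
 (1,14,3,12);
 (1,14,4,10);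
 (1,14,6,9);
 (1,14,7,8);
 (1,15,7,9);
 (2,13,3,12);
 (2,13,4,10);
 (2,13,6,9);
 (2,13,7,8);
 (2,14,4,11);
 (2,15,4,12);
 (3,7,4,5);
 (3,10,5,8);
 (3,11,6,8);
 (3,12,4,10);
 (3,12,6,9);
 (3,12,7,8);
 (3,15,4,13);
 (4,10,6,9);
 (4,10,7,8);
 (5,11,6,10);
 (5,12,7,10);
 (5,14,6,13);
 (5,15,7,13);
 (6,9,7,8);
 (6,12,7,11);
 (6,15,7,14);
 (8,12,9,11);
 (8,15,9,14);
 (10,14,11,13);
 (10,15,12,13);
 (11,15,12,14)].

Definition tp i := nth [::] trees i.
Definition gal k := (nth ([::], Posz 0) facets k).1.
Definition gcl k := (nth ([::], Posz 0) facets k).2.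
Definition gvalc k i : int :=
  (gcl k + foldr (fun m acc => nth (Posz 0) (gal k) m * Posz (nth false (tp i) m) + acc) (Posz 0) (iota 0 6))%R.
Definition r1 k := (nth (0,0) reps k).1.
Definition r2 k := (nth (0,0) reps k).2.
Definition lev k i := nth 0 (nth [::] levt k) i.

Definition closedS (s : seq bool) := all (fun r : nat * nat * nat * nat =>
  (nth false s r.1.1.1 && nth false s r.1.1.2) == (nth false s r.1.2 && nth false s r.2)) rels45.
Definition subZ s k := all (fun i => nth false s i ==> (lev k i == 0)) (iota 0 16).
Definition coverb s := all (nth false s) (iota 0 16) || has (subZ s) (iota 0 16).

Definition link k i j := has (fun r : nat * nat * nat * nat =>
  [&& r.1.1.1 == i, r.1.2 == j, lev k r.1.1.2 == 0 & lev k r.2 == 0]) rels.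
Fixpoint knownL k n : seq bool :=
  if n is n'.+1 then
    let K := knownL k n' in
    [seq nth false K i ||
     has (fun j => (lev k j == lev k i) && nth false K j && link k i j) (iota 0 16) | i <- iota 0 16]
  else [seq [|| lev k i == 0, i == r1 k | i == r2 k] | i <- iota 0 16].

Lemma K0 : all (fun i => size (tp i) == 6) (iota 0 16).
Proof. by vm_compute. Qed.
Lemma K1 : all (fun k => all (fun i => gvalc k i == Posz (lev k i)) (iota 0 16)) (iota 0 16).
Proof. Time vm_compute. reflexivity. Qed.
Lemma K1' : all (fun k => all (fun i => lev k i <= 2) (iota 0 16)) (iota 0 16).
Proof. by vm_compute. Qed.
Lemma K2 : all (fun k => has (fun i => lev k i != 0) (iota 0 16)) (iota 0 16).
Proof. by vm_compute. Qed.
Lemma K4 : all (fun r : nat * nat * nat * nat => all (fun m =>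
   nth false (tp r.1.1.1) m + nth false (tp r.1.1.2) m == nth false (tp r.1.2) m + nth false (tp r.2) m)
   (iota 0 6)) rels.
Proof. Time vm_compute. reflexivity. Qed.
Lemma K5 : all (fun k => all (nth false (knownL k 3)) (iota 0 16)) (iota 0 16).
Proof. Time vm_compute. reflexivity. Qed.
Lemma K4' : all (fun r : nat * nat * nat * nat => all (fun m =>
   nth false (tp r.1.1.1) m + nth false (tp r.1.1.2) m == nth false (tp r.1.2) m + nth false (tp r.2) m)
   (iota 0 6)) rels45.
Proof. by vm_compute. Qed.
Lemma K6 : all (fun k => (lev k (r1 k) == 1) &&
   ((lev k (r2 k) == 2) || (r2 k == r1 k))) (iota 0 16).
Proof. by vm_compute. Qed.
Lemma K7 : [&& lev 12 0 == 0, lev 12 4 == 1, lev 12 15 == 2,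
   lev 12 9 == 1, r1 12 == 4, r2 12 == 15 & (15, 0, 9, 4) \in rels].
Proof. by vm_compute. Qed.
Lemma K8 : all (fun r : nat * nat * nat * nat => [&& r.1.1.1 < 16, r.1.1.2 < 16, r.1.2 < 16 & r.2 < 16]) rels.
Proof. by vm_compute. Qed.
Lemma K8' : all (fun r : nat * nat * nat * nat => [&& r.1.1.1 < 16, r.1.1.2 < 16, r.1.2 < 16 & r.2 < 16]) rels45.
Proof. by vm_compute. Qed.
Lemma K3 : all (fun s => closedS s ==> coverb s) (allbl 16).
Proof. Time vm_compute. reflexivity. Qed.
Local Open Scope ring_scope.

Definition vec (R : realType) (i : nat) : pt R K4_edge :=
  fun e => (nth false (tp i) (eid e) : nat)%:R.

Lemma tp_size i : (i < 16)%N -> size (tp i) = 6%N.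
Proof. by move=> hi; apply/eqP; apply: (allP K0); rewrite mem_iota. Qed.

Lemma tp_in i : (i < 16)%N -> tp i \in trees.
Proof. by move=> hi; apply: mem_nth. Qed.

Lemma P_iff (R : realType) x : @base_configuration R _ _ K4_ends x <->
  exists2 i, (i < 16)%N & x = vec R i.
Proof.
split.
  move=> [B [sf ->]].
  have hs := proj1 (sf_iff B) sf.
  have := allP C2 (bitsB B); rewrite -{2}(size_bitsB B) mem_allbl => /(_ isT).
  rewrite hs eq_sym => /eqP /esym hin.
  exists (index (bitsB B) trees); first by rewrite -[16%N]/(size trees) index_mem.
  apply: functional_extensionality => e; rewrite /vec /tp nth_index //.
  by case: (eidP e) => he1 he2; rewrite bitsB_nth // he2.
move=> [i hi ->].
exists [set e | nth false (tp i) (eid e)]; split; last first.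
  by apply: functional_extensionality => e; rewrite /vec inE.
apply/sf_iff.
have -> : bitsB [set e | nth false (tp i) (eid e)] = tp i.
  apply: (@eq_from_nth _ false); first by rewrite size_bitsB tp_size.
  move=> m; rewrite size_bitsB => hm; rewrite bitsB_nth // inE eidE //.
have := allP C2 (tp i); rewrite -(tp_size hi) mem_allbl => /(_ isT) /eqP ->.
exact: tp_in.
Qed.

Lemma P_vec (R : realType) i : (i < 16)%N -> @base_configuration R _ _ K4_ends (vec R i).
Proof. by move=> hi; apply/P_iff; exists i. Qed.

Lemma aff_vec (R : realType) (a : K4_edge -> R) c i :
  aff a c (vec R i) = c + \sum_(m < 6) a (E m) * (nth false (tp i) m : nat)%:R.
Proof.
rewrite /aff; congr (_ + _).
rewrite -(sum_edges (fun m => a (E m) * (nth false (tp i) m : nat)%:R)).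
by apply: eq_bigr => e _; case: (eidP e) => _ ->.
Qed.

Lemma aff_rel (R : realType) (a : K4_edge -> R) c p q r s :
  (forall m, (m < 6)%N -> (nth false (tp p) m + nth false (tp q) m =
     nth false (tp r) m + nth false (tp s) m)%N) ->
  aff a c (vec R p) + aff a c (vec R q) = aff a c (vec R r) + aff a c (vec R s).
Proof.
move=> h; rewrite !aff_vec.
have H : forall u v, c + \sum_(m < 6) a (E m) * (nth false (tp u) m : nat)%:R +
  (c + \sum_(m < 6) a (E m) * (nth false (tp v) m : nat)%:R) =
  c + c + \sum_(m < 6) a (E m) * (nth false (tp u) m + nth false (tp v) m)%N%:R.
  move=> u v; rewrite addrACA -big_split /=; congr (_ + _).
  by apply: eq_bigr => m _; rewrite natrD mulrDr.
rewrite !H; congr (_ + _); apply: eq_bigr => m _; by rewrite h.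
Qed.

Lemma rel_ok (R : realType) (a : K4_edge -> R) c r : r \in rels ->
  aff a c (vec R r.1.1.1) + aff a c (vec R r.1.1.2) = aff a c (vec R r.1.2) + aff a c (vec R r.2).
Proof.
move=> hr; apply: aff_rel => m hm; apply/eqP.
by have /allP := allP K4 r hr; apply; rewrite mem_iota.
Qed.

Lemma rel45_ok (R : realType) (a : K4_edge -> R) c r : r \in rels45 ->
  aff a c (vec R r.1.1.1) + aff a c (vec R r.1.1.2) = aff a c (vec R r.1.2) + aff a c (vec R r.2).
Proof.
move=> hr; apply: aff_rel => m hm; apply/eqP.
by have /allP := allP K4' r hr; apply; rewrite mem_iota.
Qed.

Definition ga (R : realType) k : K4_edge -> R := fun e => (nth (Posz 0) (gal k) (eid e))%:~R.
Definition gc (R : realType) k : R := (gcl k)%:~R.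

Lemma aff_g (R : realType) k i : aff (ga R k) (gc R k) (vec R i) = (gvalc k i)%:~R.
Proof.
rewrite aff_vec /gvalc rmorphD /=; congr (_ + _).
have hf : forall (s : seq nat) (F : nat -> int),
  (foldr (fun m acc => F m + acc) (Posz 0) s)%:~R = \sum_(m <- s) ((F m)%:~R : R).
  move=> s F; elim: s => [|x s IH]; first by rewrite big_nil.
  by rewrite big_cons /= rmorphD /= IH.
have hf' := hf (iota 0 6) (fun m => nth (Posz 0) (gal k) m * Posz (nth false (tp i) m)).
cbv beta in hf'; rewrite hf'.
have -> : iota 0 6 = index_iota 0 6 by []. rewrite big_mkord.
apply: eq_bigr => m _; rewrite /ga eidE // rmorphM /=.
by [].
Qed.
Local Open Scope ring_scope.

Notation PP R := (@base_configuration R _ _ K4_ends).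

Lemma in16 i : (i < 16)%N -> i \in iota 0 16.
Proof. by rewrite mem_iota. Qed.

Lemma aff_lev (R : realType) k i : (k < 16)%N -> (i < 16)%N ->
  aff (ga R k) (gc R k) (vec R i) = (lev k i)%:R.
Proof.
move=> hk hi; rewrite aff_g.
by rewrite (eqP (allP (allP K1 k (in16 hk)) i (in16 hi))).
Qed.

Lemma g_nonneg (R : realType) k : (k < 16)%N -> nonneg_on (PP R) (ga R k) (gc R k).
Proof. by move=> hk x /P_iff [i hi ->]; rewrite aff_lev // ler0n. Qed.

Lemma g_ne (R : realType) k : (k < 16)%N -> ~ same_set (zero_set (PP R) (ga R k) (gc R k)) (PP R).
Proof.
move=> hk hss; have /hasP [i hi hl] := allP K2 k (in16 hk).
have hi16 : (i < 16)%N by rewrite mem_iota in hi.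
have [_] := proj2 (hss (vec R i)) (P_vec R hi16).
by rewrite aff_lev // => /eqP; rewrite pnatr_eq0 (negbTE hl).
Qed.

Definition V (R : realType) (L : nat -> R) k (z : nat) : R :=
  if z == 0%N then 0 else if z == 1%N then L (r1 k) else L (r2 k).

Lemma knownL0 k : knownL k 0 = [seq [|| lev k i == 0, i == r1 k | i == r2 k] | i <- iota 0 16].
Proof. by []. Qed.
Lemma knownLS k n : knownL k n.+1 = [seq nth false (knownL k n) i ||
     has (fun j => (lev k j == lev k i) && nth false (knownL k n) j && link k i j) (iota 0 16) | i <- iota 0 16].
Proof. by []. Qed.

Lemma known_inv (R : realType) (L : nat -> R) k : (k < 16)%N ->
  (forall r, r \in rels -> L r.1.1.1 + L r.1.1.2 = L r.1.2 + L r.2) ->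
  (forall i, (i < 16)%N -> lev k i = 0%N -> L i = 0) ->
  forall i, (i < 16)%N -> L i = V L k (lev k i).
Proof.
move=> hk hrel hz.
have /andP [/eqP h1 h2] := allP K6 k (in16 hk).
suff H : forall n i, (i < 16)%N -> nth false (knownL k n) i -> L i = V L k (lev k i).
  by move=> i hi; apply: (H 3%N i hi); exact: (allP (allP K5 k (in16 hk)) i (in16 hi)).
elim => [|n IH] i hi.
  rewrite knownL0 (nth_map 0%N) ?size_iota // nth_iota // add0n.
  case/or3P => [/eqP hl|/eqP ->|/eqP ->].
  - by rewrite /V hl hz.
  - by rewrite /V h1.
  - case/orP: h2 => [/eqP h2|/eqP h2]; first by rewrite /V h2.
    by rewrite h2 /V h1.
rewrite knownLS (nth_map 0%N) ?size_iota // nth_iota // add0n.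
case/orP => [/IH -> //|/hasP [j hj /andP [/andP [/eqP hlj hkj] hlink]]].
have hj16 : (j < 16)%N by rewrite mem_iota in hj.
rewrite -hlj -(IH j hj16 hkj).
case/hasP: hlink => r hr /and4P [/eqP e1 /eqP e2 /eqP z1 /eqP z2].
have := hrel r hr; have /and4P [b1 b2 b3 b4] := allP K8 r hr.
by rewrite (hz _ b2 z1) (hz _ b4 z2) !addr0 e1 e2.
Qed.

Lemma upper (R : realType) : levelness_bound (PP R) 3.
Proof.
move=> a c [hnn [hface hne hmax]].
pose L i := aff a c (vec R i).
have Lnn : forall i, (i < 16)%N -> 0 <= L i by move=> i hi; apply: hnn; apply: P_vec.
pose s := [seq L i == 0 | i <- iota 0 16].
have ns : forall i, (i < 16)%N -> nth false s i = (L i == 0).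
  by move=> i hi; rewrite (nth_map 0%N) ?size_iota // nth_iota.
have hcl : closedS s.
  apply/allP => r hr; have /and4P [b1 b2 b3 b4] := allP K8' r hr.
  rewrite !ns // -(paddr_eq0 (Lnn _ b1) (Lnn _ b2)) -(paddr_eq0 (Lnn _ b3) (Lnn _ b4)).
  by rewrite /L rel45_ok.
have hsize : size s = 16%N by rewrite size_map size_iota.
have hcov : coverb s.
  by have := allP K3 s; rewrite -hsize mem_allbl => /(_ isT) /implyP; apply.
case/orP: hcov => [hall|/hasP [k hk hsub]].
  exfalso; apply: hne => x; split => [[]//|hx]; split => //.
  case/P_iff: hx => i hi ->.
  by have := allP hall i (in16 hi); rewrite ns // => /eqP.
have hk16 : (k < 16)%N by rewrite mem_iota in hk.
have hZ : forall i, (i < 16)%N -> lev k i = 0%N -> L i = 0.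
  move=> i hi hl.
  have hzi : zero_set (PP R) (ga R k) (gc R k) (vec R i).
    by split; [apply: P_vec | rewrite aff_lev // hl].
  have hf : is_face (PP R) (zero_set (PP R) (ga R k) (gc R k)).
    by exists (ga R k), (gc R k); split; [exact: g_nonneg|].
  have hsb : sub_set (zero_set (PP R) a c) (zero_set (PP R) (ga R k) (gc R k)).
    move=> x [hx hx0]; split => //; move: hx hx0 => /P_iff [j hj ->] hx0.
    have := allP hsub j (in16 hj); rewrite ns // /L hx0 eqxx /= => /eqP hl'.
    by rewrite aff_lev // hl'.
  by have [] := hmax _ hf (@g_ne R k hk16) hsb _ hzi.
have hrel : forall r, r \in rels -> L r.1.1.1 + L r.1.1.2 = L r.1.2 + L r.2.
  by move=> r hr; exact: rel_ok.
have hinv := known_inv hk16 hrel hZ.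
exists [:: 0; L (r1 k); L (r2 k)]; split => // x /P_iff [i hi ->].
rewrite -/(L i) (hinv i hi) /V.
case: ifP => _; first by rewrite inE eqxx.
by case: ifP => _; rewrite !inE eqxx ?orbT.
Qed.

Lemma lower (R : realType) k' : levelness_bound (PP R) k' -> (3 <= k')%N.
Proof.
move=> hb.
have hk : (12 < 16)%N by [].
have l0 : lev 12 0 = 0%N by vm_compute.
have l4 : lev 12 4 = 1%N by vm_compute.
have l9 : lev 12 9 = 1%N by vm_compute.
have l15 : lev 12 15 = 2%N by vm_compute.
have e1 : r1 12 = 4%N by vm_compute.
have e2 : r2 12 = 15%N by vm_compute.
have hr : (15, 0, 9, 4)%N \in rels by vm_compute.
have hle : forall i, (i < 16)%N -> (lev 12 i <= 2)%N.
  by move=> i hi; exact: (allP (allP K1' 12 (in16 hk)) i (in16 hi)).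
have fd : facet_defining (PP R) (ga R 12) (gc R 12).
  split; first exact: g_nonneg.
  split.
  - by exists (ga R 12), (gc R 12); split; [exact: g_nonneg|].
  - exact: g_ne.
  - move=> F' [a2 [c2 [hnn2 hss2]]] hne2 hsub.
    pose L i := aff a2 c2 (vec R i).
    have hZ : forall i, (i < 16)%N -> lev 12 i = 0%N -> L i = 0.
      move=> i hi hl; have : F' (vec R i).
        by apply: hsub; split; [apply: P_vec | rewrite aff_lev // hl].
      by move/hss2 => [].
    have hinv := known_inv hk (fun r hr => rel_ok a2 c2 hr) hZ.
    have hd : L 15%N + L 0%N = L 9%N + L 4%N := rel_ok a2 c2 hr.
    have h9 : L 9%N = L 4%N by rewrite hinv // l9 /V /= e1.
    rewrite (hZ 0%N) // addr0 h9 in hd.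
    have hv : forall i, (i < 16)%N -> L i = (lev 12 i)%:R * L 4%N.
      move=> i hi; rewrite hinv // /V e1 e2 hd.
      have := hle i hi; case: (lev 12 i) => [|[|[|n]]] //= _.
      - by rewrite mul0r.
      - by rewrite mul1r.
      - by rewrite mulr2n mulrDl mul1r.
    have h4 : L 4%N != 0.
      apply/eqP => h4; apply: hne2 => x; split => [/hss2 []//|hx]; apply/hss2; split => //.
      by case/P_iff: hx => i hi ->; rewrite -/(L i) hv // h4 mulr0.
    move=> x /hss2 [hx hx0]; split => //; move: hx hx0 => /P_iff [i hi ->] hx0.
    move: hx0; rewrite -/(L i) hv // aff_lev // => /eqP; rewrite mulf_eq0 (negbTE h4) orbF.
    by move/eqP.
have [s [hs hin]] := hb _ _ fd.
have h0 := hin _ (P_vec R (i:=0) isT); rewrite aff_lev // l0 in h0.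
have h1 := hin _ (P_vec R (i:=4) isT); rewrite aff_lev // l4 in h1.
have h2 := hin _ (P_vec R (i:=15) isT); rewrite aff_lev // l15 in h2.
apply: leq_trans hs.
have hu : uniq [:: (0%N)%:R; (1%N)%:R; (2%N)%:R : R].
  by rewrite /= !inE !eqr_nat.
apply: (uniq_leq_size hu) => y; rewrite !inE => /or3P [] /eqP -> //.
Qed.

Theorem proposition3p2 (R : realType) :
  is_levelness (@base_configuration R _ _ K4_ends) 3.
Proof. split; [exact: upper | move=> k'; exact: lower]. Qed.
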